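(* Let $C$ be a complete structured DNNF and $g$ a $\cup$-gate of $C$. The following procedure $\mathrm{Enum}(g)$ enumerates $S(g)$ (possibly with duplicates) with delay $O(\mathrm{depth}(C)\times|S|)$, where $S$ is the produced assignment: traverse, by a naive preorder traversal following wires backwards from $g$ through $\cup$-gates only, the gates $g'\in\downarrow g$ (each $g'$ possibly reached once per path); for each such $g'$, if $g'$ is a var-gate output $S_{\mathrm{var}}(g')$, and if $g'$ is a $\times$-gate with left input $g_L$ and right input $g_R$, then for each $S_L$ output by $\mathrm{Enum}(g_L)$ and each $S_R$ output by $\mathrm{Enum}(g_R)$ (nested, with recursive enumerations run lazily, resuming only when the next value is requested) output $S_L\cup S_R$.
   Context: A set circuit $C=(G,W,\mu)$ is a finite DAG with gates $G$, wires $W\subseteq G\times G$, gate types $\mu(g)\in\{\top,\bot,\mathrm{var},\times,\cup\}$, and an injective map $S_{\mathrm{var}}$ giving each var-gate a set of variables; $C_{\mathrm{var}}$ is the union of all $S_{\mathrm{var}}(g)$. Inputs of $g$ are the $g'$ with $(g',g)\in W$; $\top,\bot,\mathrm{var}$-gates have no inputs, $\times$-gates exactly two, $\cup$-gates at least one, and $\top,\bot$-gates are never inputs. Captured sets: $S(g)=\{S_{\mathrm{var}}(g)\}$ for var-gates, $\emptyset$ for $\bot$, $\{\emptyset\}$ for $\top$, $\{S_1\cup S_2\mid S_1\in S(g_1),S_2\in S(g_2)\}$ for a $\times$-gate with inputs $g_1,g_2$, the union over inputs for $\cup$-gates. Depth is the maximal length of a directed path. For a $\cup$-gate $g$, write $g'\overset{\cup}{\leadsto}g$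 if there is a directed path of wires from $g'$ to $g$ all of whose gates other than $g'$ are $\cup$-gates, and $\downarrow g$ is the set of var- and $\times$-gates $g'$ with $g'\overset{\cup}{\leadsto}g$. A v-tree for $C$ is a binary tree whose leaves are labeled by sets of variables partitioning $C_{\mathrm{var}}$; a structuring function $\sigma$ maps gates to v-tree nodes so that each var-gate $g$ goes to a leaf whose label contains $S_{\mathrm{var}}(g)$, for each wire $(g',g)$ either $\sigma(g')=\sigma(g)$ or $g'$ is a $\cup$-gate with $\sigma(g')$ a child of $\sigma(g)$, and each $\times$-gate $g$ has a left input mapped to the left child and a right input mapped to the right child of $\sigma(g)$. A complete structured DNNF is a set circuit with a v-tree and structuring function. Delay is the maximal time before the first output, between consecutive outputs, and after the last. *)

(* Defs.v *)
From HB Require Import structures.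
From mathcomp Require Import all_boot.
Set Implicit Arguments. Unset Strict Implicit. Unset Printing Implicit Defensive.

Inductive gtype := GTop | GBot | GVar | GTimes | GUnion.

Definition gtype_eqb (a b : gtype) : bool :=
  match a, b with
  | GTop, GTop | GBot, GBot | GVar, GVar | GTimes, GTimes | GUnion, GUnion => true
  | _, _ => false end.
Lemma gtype_eqP : Equality.axiom gtype_eqb.
Proof. by case; case; constructor. Qed.
HB.instance Definition _ := hasDecEq.Build gtype gtype_eqP.

(* A set circuit with gates G and variables X.
   [wire g' g] means (g', g) \in W, i.e. g' is an input of g.
   [svar g] is S_var(g); it is only meaningful for var-gates. *)
Record set_circuit (G X : finType) := SetCircuit {
  wire : rel G;
  mu   : G -> gtype;
  svar : G -> {set X}
}.

Section Circuits.
Variables (G X : finType) (C : set_circuit G X).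

Definition inputs (g : G) : {set G} := [set g' | wire C g' g].

Definition wf_circuit : Prop :=
  [/\
      (forall g g', wire C g' g -> ~~ connect (wire C) g g'),
      (forall g1 g2, mu C g1 = GVar -> mu C g2 = GVar ->
                     svar C g1 = svar C g2 -> g1 = g2),
      (forall g, mu C g \in [:: GTop; GBot; GVar] -> inputs g = set0),
      (forall g, mu C g = GTimes -> #|inputs g| = 2) /\
      (forall g, mu C g = GUnion -> 0 < #|inputs g|) &
      (forall g' g, mu C g' \in [:: GTop; GBot] -> ~~ wire C g' g)].

Definition Cvar : {set X} := \bigcup_(g | mu C g == GVar) svar C g.

(* Captured sets: [captures g S] iff S \in S(g) (least fixpoint of the
   defining equations, well-defined since C is a DAG). *)
Inductive captures : G -> {set X} -> Prop :=
| capt_var g : mu C g = GVar -> captures g (svar C g)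
| capt_top g : mu C g = GTop -> captures g set0
| capt_times g g1 g2 S1 S2 : mu C g = GTimes ->
    wire C g1 g -> wire C g2 g -> g1 != g2 ->
    captures g1 S1 -> captures g2 S2 -> captures g (S1 :|: S2)
| capt_union g g' S : mu C g = GUnion -> wire C g' g ->
    captures g' S -> captures g S.

Definition is_depth (d : nat) : Prop :=
  (exists g (p : seq G), path (wire C) g p /\ size p = d) /\
  (forall g (p : seq G), path (wire C) g p -> size p <= d).

End Circuits.

Inductive vtree (X : finType) :=
| VLeaf of {set X}
| VNode of vtree X & vtree X.

(* Nodes of a v-tree are addressed by paths from the root:
   false = go to the left child, true = go to the right child. *)
Fixpoint subtree_at (X : finType) (t : vtree X) (p : seq bool) : option (vtree X) :=
  match p with
  | [::] => Some t
  | b :: p' => match t with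
               | VLeaf _ => None
               | VNode l r => subtree_at (if b then r else l) p'
               end
  end.

Fixpoint vleaves (X : finType) (t : vtree X) : seq {set X} :=
  match t with
  | VLeaf L => [:: L]
  | VNode l r => vleaves l ++ vleaves r
  end.

Definition lchild (p : seq bool) := rcons p false.
Definition rchild (p : seq bool) := rcons p true.

Section Structured.
Variables (G X : finType) (C : set_circuit G X).

Definition vtree_for (t : vtree X) : Prop :=
  (forall i j, i < j < size (vleaves t) ->
     [disjoint nth set0 (vleaves t) i & nth set0 (vleaves t) j]) /\
  \bigcup_(L <- vleaves t) L = Cvar C.

Definition structuring (t : vtree X) (sigma : G -> seq bool) : Prop :=
  [/\ (forall g, subtree_at t (sigma g) <> None),
      (forall g, mu C g = GVar ->
         exists L, subtree_at t (sigma g) = Some (VLeaf L) /\ svar C g \subset L),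
      (forall g' g, wire C g' g ->
         sigma g' = sigma g \/
         (mu C g' = GUnion /\
          (sigma g' = lchild (sigma g) \/ sigma g' = rchild (sigma g)))) &
      (forall g, mu C g = GTimes ->
         exists gL gR, [/\ wire C gL g, wire C gR g,
                           sigma gL = lchild (sigma g) & sigma gR = rchild (sigma g)])].

End Structured.

(* A trace of a run: [Tick] is one unit of work, [Out S] outputs S. *)
Inductive event (X : finType) := Tick | Out of {set X}.
Arguments Tick {X}.

Definition outputs (X : finType) (tr : seq (event X)) : seq {set X} :=
  pmap (fun e => if e is Out A then Some A else None) tr.

(* Writing out a set S costs |S| unit steps, then S is output. *)
Definition out_ev (X : finType) (A : {set X}) : seq (event X) :=
  rcons (nseq #|A| Tick) (Out A).

(* Lazy nested loop: run Enum(g_L); each time it outputs S_L (one step to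
   resume), run Enum(g_R) afresh; each time it outputs S_R, build and
   output S_L \cup S_R (cost |S_L \cup S_R| + 1). All work done by the
   recursive enumerations is kept in the trace. *)
Definition nest (X : finType) (tL tR : seq (event X)) : seq (event X) :=
  flatten [seq match e with
               | Tick => [:: Tick]
               | Out SL => Tick :: flatten [seq match e' with
                                               | Tick => [:: Tick]
                                               | Out SR => out_ev (SL :|: SR)
                                               end | e' <- tR]
               end | e <- tL].

Section Enum.
Variables (G X : finType) (C : set_circuit G X) (sigma : G -> seq bool).

Definition left_input (g : G) : option G :=
  [pick g' | wire C g' g && (sigma g' == lchild (sigma g))].
Definition right_input (g : G) : option G :=
  [pick g' | wire C g' g && (sigma g' == rchild (sigma g))].

(* [visit n h]: visiting gate h (one step on entry, one on exit); union-gates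
   are traversed by following all their input wires backwards (naive
   preorder, in the enumeration order of G), var-gates output S_var, and
   times-gates run the nested lazy enumeration of their left/right inputs.
   n is fuel; n = #|G| is always enough on a DAG (recursion depth is at
   most depth(C) + 1 <= #|G|). *)
Fixpoint visit (n : nat) (h : G) : seq (event X) :=
  if n is n'.+1 then
    Tick :: (match mu C h with
             | GUnion => flatten [seq visit n' h' | h' <- enum (fun h' => wire C h' h)]
             | GVar => out_ev (svar C h)
             | GTimes => match left_input h, right_input h with
                         | Some gL, Some gR => nest (visit n' gL) (visit n' gR)
                         | _, _ => [::]
                         end
             | _ => [::]
             end) ++ [:: Tick]
  else [::].

Definition Enum (g : G) : seq (event X) := visit #|G| g.

End Enum.

(* Delay check.  [prev] is the size of the previously output set (0 at the
   start), [acc] the number of steps since the last output.  The gap before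
   an output S must be <= B(|S_prev| + |S|) (B(|S|) for the first output),
   the gap after the last output S_last must be <= B(|S_last|). *)
Fixpoint gaps_ok (X : finType) (B : nat -> nat) (acc prev : nat)
    (tr : seq (event X)) : bool :=
  match tr with
  | [::] => acc <= B prev
  | Tick :: tr' => gaps_ok B acc.+1 prev tr'
  | Out A :: tr' => (acc <= B (prev + #|A|)) && gaps_ok B 0 #|A| tr'
  end.

Definition delay_bounded (X : finType) (B : nat -> nat) (tr : seq (event X)) : bool :=
  gaps_ok B 0 0 tr.

(* Main.v *)
Require Import Defs.
From mathcomp Require Import all_boot zify.
Set Implicit Arguments. Unset Strict Implicit. Unset Printing Implicit Defensive.

Section Traces.
Variable X : finType.

Inductive aev := ATick | AOut of {set X} & nat.

Definition strip (t : seq aev) : seq (event X) :=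
  map (fun e => match e with ATick => Tick | AOut A _ => Out A end) t.

Definition aouts (t : seq aev) : seq ({set X} * nat) :=
  pmap (fun e => if e is AOut A w then Some (A, w) else None) t.

Fixpoint okr (m a pw : nat) (t : seq aev) : bool :=
  match t with
  | [::] => true
  | ATick :: t' => okr m a.+1 pw t'
  | AOut _ w :: t' => (a <= m * (pw + w)) && okr m 0 w t'
  end.

Fixpoint fin (a pw : nat) (t : seq aev) : nat * nat :=
  match t with
  | [::] => (a, pw)
  | ATick :: t' => fin a.+1 pw t'
  | AOut _ w :: t' => fin 0 w t'
  end.

Definition allw1 t := all (fun p => 0 < p.2) (aouts t).
Definition allsz t := all (fun p : {set X} * nat => #|p.1| <= p.2) (aouts t).

Definition Good m t :=
  [&& okr m 0 0 t, (fin 0 0 t).1 <= m * (fin 0 0 t).2, aouts t != [::],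
      allw1 t & allsz t].

Lemma aouts_cat t1 t2 : aouts (t1 ++ t2) = aouts t1 ++ aouts t2.
Proof. exact: pmap_cat. Qed.

Lemma okr_cat m a pw t1 t2 :
  okr m a pw (t1 ++ t2) = okr m a pw t1 && okr m (fin a pw t1).1 (fin a pw t1).2 t2.
Proof.
elim: t1 a pw => [|[|A w] t1 IH] a pw //=; by rewrite IH ?andbA.
Qed.

Lemma fin_cat a pw t1 t2 :
  fin a pw (t1 ++ t2) = fin (fin a pw t1).1 (fin a pw t1).2 t2.
Proof. by elim: t1 a pw => [|[|A w] t1 IH] a pw //=. Qed.

Lemma okr_nseq m a pw k t : okr m a pw (nseq k ATick ++ t) = okr m (a + k) pw t.
Proof. by elim: k a => [|k IH] a /=; rewrite ?addn0 // IH addnS. Qed.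

Lemma fin_nseq a pw k t : fin a pw (nseq k ATick ++ t) = fin (a + k) pw t.
Proof. by elim: k a => [|k IH] a /=; rewrite ?addn0 // IH addnS. Qed.

Lemma okr_rel m a pw a' pw' t : okr m a pw t -> a' + m * pw <= a + m * pw' ->
  okr m a' pw' t /\
  (fin a' pw' t).1 + m * (fin a pw t).2 <= (fin a pw t).1 + m * (fin a' pw' t).2.
Proof.
elim: t a pw a' pw' => [|[|A w] t IH] a pw a' pw' /=.
- by move=> _ H; split.
- move=> H1 H2; apply: IH => //; lia.
- case/andP=> H1 H2 H3; split; last by rewrite leqnn.
  apply/andP; split => //. rewrite mulnDr; rewrite mulnDr in H1; lia.
Qed.

Lemma okr_mono m m' a pw t : m <= m' -> okr m a pw t -> okr m' a pw t.
Proof.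
move=> le; elim: t a pw => [|[|A w] t IH] a pw //=; first exact: IH.
case/andP=> H1 H2; rewrite IH // andbT; apply: leq_trans H1 _; exact: leq_mul.
Qed.

Lemma okr_lift m0 e a a' pw t : okr m0 a pw t -> allw1 t -> a' <= a + e ->
  okr (m0 + e) a' pw t.
Proof.
elim: t a a' pw => [|[|A w] t IH] a a' pw //=.
- move=> H1 H2 H3; apply: (IH a.+1) => //; lia.
- rewrite /allw1 /=; case/andP=> H1 H2 /andP[w1 H4] H5; apply/andP; split.
    have : e <= e * (pw + w) by rewrite leq_pmulr // addn_gt0 w1 orbT.
    rewrite mulnDl; lia.
  by apply: (IH 0) => //.
Qed.

Lemma fin_out a pw a' pw' t : aouts t != [::] -> fin a pw t = fin a' pw' t.
Proof.
elim: t a pw a' pw' => [|[|A w] t IH] a pw a' pw' //=; first exact: IH.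
Qed.

Lemma fin_noout a pw t : aouts t = [::] -> fin a pw t = (a + size t, pw).
Proof.
elim: t a => [|[|A w] t IH] a //=; first by rewrite addn0.
by move=> /IH ->; rewrite addnS.
Qed.

Lemma fin_w a pw t : allw1 t -> aouts t != [::] -> 0 < (fin a pw t).2.
Proof.
rewrite /allw1; elim: t a pw => [|[|A w] t IH] a pw //=; first exact: IH.
case/andP=> w1 H _; case: (aouts t =P [::]) => [E|/eqP E]; last exact: IH.
by rewrite fin_noout.
Qed.

Lemma Good_mono m m' t : m <= m' -> Good m t -> Good m' t.
Proof.
move=> le /and5P[H1 H2 H3 H4 H5]; apply/and5P; split => //.
  exact: okr_mono H1.
apply: leq_trans H2 _; exact: leq_mul.
Qed.

Definition wrap t := ATick :: t ++ [:: ATick].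

Lemma aouts_wrap t : aouts (wrap t) = aouts t.
Proof. by rewrite /wrap /= aouts_cat cats0. Qed.

Lemma Good_wrap m0 t : Good m0 t -> Good (m0 + 3) (wrap t).
Proof.
move=> /and5P[H1 H2 H3 H4 H5]; apply/and5P; split.
- rewrite /wrap /= okr_cat /= andbT; exact: (okr_lift (a := 0)).
- rewrite /wrap /= fin_cat /= (fin_out 1 0 0 0 H3).
  have := fin_w 0 0 H4 H3; move: H2.
  case: (fin 0 0 t) => x y /= H2 Hy. rewrite mulnDl; lia.
- by rewrite aouts_wrap.
- by rewrite /allw1 aouts_wrap.
- by rewrite /allsz aouts_wrap.
Qed.


Lemma aouts_flatten ts : aouts (flatten ts) = flatten (map aouts ts).
Proof. by elim: ts => //= t ts IH; rewrite aouts_cat IH. Qed.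

Lemma all_flat (T : Type) (P : pred T) (ss : seq (seq T)) :
  all P (flatten ss) = all (all P) ss.
Proof. by elim: ss => //= s ss IH; rewrite all_cat IH. Qed.

Lemma body_ok m ts : all (Good m) ts -> forall a pw, a <= m * pw ->
  okr m a pw (flatten ts) && ((fin a pw (flatten ts)).1 <= m * (fin a pw (flatten ts)).2).
Proof.
elim: ts => [|t ts IH] /=; first by move=> _ a pw ->.
case/andP=> /and5P[H1 H2 H3 H4 H5] Hts a pw Ha.
have [Hok _] := @okr_rel m 0 0 a pw t H1 ltac:(by rewrite muln0 addn0).
rewrite okr_cat fin_cat Hok /=; apply: IH => //.
by rewrite (fin_out a pw 0 0 H3).
Qed.

Lemma Good_flatten m ts : all (Good m) ts -> has (fun t => aouts t != [::]) ts ->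
  Good m (flatten ts).
Proof.
move=> H Hh; have /andP[H1 H2] := body_ok H (leq0n (m * 0)).
apply/and5P; split => //.
- rewrite aouts_flatten; elim: ts Hh {H H1 H2} => //= t ts IH /orP[] H.
    by case: (aouts t) H.
  by case: (aouts t) => [|? ?] //=; exact: IH.
- rewrite /allw1 aouts_flatten all_flat all_map; apply: sub_all H => t.
  by case/and5P.
- rewrite /allsz aouts_flatten all_flat all_map; apply: sub_all H => t.
  by case/and5P.
Qed.

Definition innerA (SL : {set X}) (wl : nat) (tR : seq aev) :=
  flatten [seq match e' with
               | ATick => [:: ATick]
               | AOut SR wr => rcons (nseq #|SL :|: SR| ATick) (AOut (SL :|: SR) (wl + wr))
               end | e' <- tR].

Definition nestA (tL tR : seq aev) :=
  flatten [seq match e with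
               | ATick => [:: ATick]
               | AOut SL wl => ATick :: innerA SL wl tR
               end | e <- tL].

Lemma strip_nest tL tR : strip (nestA tL tR) = nest (strip tL) (strip tR).
Proof.
rewrite /strip /nestA /nest map_flatten -!map_comp; congr flatten.
apply: eq_map => -[|SL wl] //=; congr cons.
rewrite /innerA map_flatten -!map_comp; congr flatten.
apply: eq_map => -[|SR wr] //=.
by rewrite /out_ev map_rcons map_nseq.
Qed.

Lemma aouts_nseq k : aouts (nseq k ATick) = [::].
Proof. by elim: k. Qed.

Lemma aouts_inner SL wl tR :
  aouts (innerA SL wl tR) = [seq (SL :|: p.1, wl + p.2) | p <- aouts tR].
Proof.
elim: tR => [|[|SR wr] t IH] //=.
by rewrite /innerA /= -/(innerA SL wl t) aouts_cat IH -cats1 aouts_cat aouts_nseq.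
Qed.


Lemma aouts_nest tL tR : aouts (nestA tL tR) =
  [seq (p.1 :|: q.1, p.2 + q.2) | p <- aouts tL, q <- aouts tR].
Proof.
elim: tL => [|[|SL wl] t IH] //=.
by rewrite /nestA /= -/(nestA t tR) aouts_cat IH aouts_inner.
Qed.

Lemma inner_noout SL wl t : aouts t = [::] -> innerA SL wl t = t.
Proof.
elim: t => [|[|SR wr] t IH] //= H.
by rewrite /innerA /= -/(innerA SL wl t) IH.
Qed.

Lemma fin_inner SL wl tR a pw a' pw' : aouts tR != [::] ->
  fin a' pw' (innerA SL wl tR) = ((fin a pw tR).1, wl + (fin a pw tR).2).
Proof.
elim: tR a pw a' pw' => [|[|SR wr] t IH] a pw a' pw' //=.
  by move=> H; rewrite /innerA /= -/(innerA SL wl t) (IH a.+1 pw).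
move=> _; rewrite /innerA /= -/(innerA SL wl t) cat_rcons fin_nseq /=.
case: (aouts t =P [::]) => [E|/eqP E]; last exact: IH.
by rewrite inner_noout // !fin_noout.
Qed.

Lemma inner_ok m0 (SL : {set X}) wl tR : forall a pw a' pw',
  okr m0 a pw tR -> allsz tR -> allw1 tR -> #|SL| <= wl ->
  a' + m0 * pw <= a + (m0 + 2) * pw' + (m0 + 1) * wl ->
  okr (m0 + 2) a' pw' (innerA SL wl tR).
Proof.
rewrite /allsz /allw1.
elim: tR => [|[|SR wr] t IH] a pw a' pw' //=.
  move=> H1 H2 H3 H4 H5; rewrite /innerA /= -/(innerA SL wl t).
  apply: (IH a.+1 pw) => //; lia.
case/andP=> H1 H2 /andP[Hs H3] /andP[Hw H4] H5 H6.
rewrite /innerA /= -/(innerA SL wl t) cat_rcons okr_nseq /=.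
apply/andP; split.
  have := cardsUI SL SR; move: H1 H6 Hs.
  rewrite !mulnDr !mulnDl /=; lia.
apply: (IH 0 wr) => //.
rewrite !mulnDr !mulnDl; lia.
Qed.

Lemma outer_ok m0 tR tL : Good m0 tR -> forall aL pwL a' pw',
  okr m0 aL pwL tL -> allw1 tL -> allsz tL ->
  a' + m0 * pwL <= aL + (m0 + 2) * pw' ->
  okr (m0 + 2) a' pw' (nestA tL tR) /\
  (fin a' pw' (nestA tL tR)).1 + m0 * (fin aL pwL tL).2 <=
  (fin aL pwL tL).1 + (m0 + 2) * (fin a' pw' (nestA tL tR)).2.
Proof.
move=> GR; have /and5P[R1 R2 R3 R4 R5] := GR.
rewrite /allsz /allw1.
elim: tL => [|[|SL wl] t IH] aL pwL a' pw' //=.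
  move=> H1 H2 H3 H4; rewrite /nestA /= -/(nestA t tR).
  apply: IH => //; lia.
case/andP=> H1 H2 /andP[Hw H3] /andP[Hs H4] H5.
rewrite /nestA /= -/(nestA t tR) okr_cat fin_cat.
rewrite (@fin_inner SL wl tR 0 0 _ _ R3).
have -> : okr (m0 + 2) a'.+1 pw' (innerA SL wl tR).
  apply: (inner_ok (a := 0) (pw := 0)) => //.
  move: H1 H5; rewrite !mulnDr !mulnDl; lia.
rewrite /=; apply: IH => //.
move: R2; case: (fin 0 0 tR) => x y /= R2.
rewrite !mulnDr !mulnDl; lia.
Qed.

Lemma Good_nest m0 tL tR : Good m0 tL -> Good m0 tR -> Good (m0 + 2) (nestA tL tR).
Proof.
move=> GL GR; have /and5P[L1 L2 L3 L4 L5] := GL; have /and5P[R1 R2 R3 R4 R5] := GR.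
have [H1 H2] := @outer_ok m0 tR tL GR 0 0 0 0 L1 L4 L5 ltac:(by rewrite !muln0).
apply/and5P; split => //.
- move: H2 L2; case: (fin 0 0 (nestA tL tR)) => x y; case: (fin 0 0 tL) => u v /=.
  rewrite !mulnDl; lia.
- rewrite aouts_nest -size_eq0 size_allpairs muln_eq0 !size_eq0.
  by rewrite negb_or L3 R3.
- rewrite /allw1 aouts_nest; apply/all_allpairsP => p q _ Hq /=.
  by rewrite addn_gt0 (allP R4 q Hq) orbT.
- rewrite /allsz aouts_nest; apply/all_allpairsP => p q Hp Hq /=.
  have := cardsUI p.1 q.1; have := allP L5 p Hp; have := allP R5 q Hq; simpl; lia.
Qed.

End Traces.

Arguments ATick {X}.

Lemma final_gaps (X : finType) m d (t : seq (aev X)) a pw prev :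
  okr m a pw t -> (fin a pw t).1 <= m * (fin a pw t).2 ->
  all (fun p : {set X} * nat => p.2 <= #|p.1|.+1) (aouts t) ->
  pw <= prev.+1 -> m <= 5 * d.+1 ->
  gaps_ok (fun n => 10 * d.+1 * n.+1) a prev (strip t).
Proof.
move=> + + + + Hm.
elim: t a pw prev => [|[|A w] t IH] a pw prev /=.
- move=> _ H _ Hp.
  have : m * pw <= 5 * d.+1 * prev.+1 by apply: leq_mul.
  nia.
- move=> H1 H2 H3 H4; exact (IH _ _ _ H1 H2 H3 H4).
- case/andP=> H1 H2 H3 /andP[Hw H4] Hp; apply/andP; split; last exact (IH 0 w #|A| H2 H3 H4 Hw).
  have : m * (pw + w) <= 5 * d.+1 * (prev + #|A|).+2.
    by apply: leq_mul => //; lia.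
  nia.
Qed.

Lemma outputs_strip (X : finType) (t : seq (aev X)) :
  outputs (strip t) = map fst (aouts t).
Proof. by elim: t => [|[|A w] t IH] //=; rewrite /outputs /= -/(outputs _) IH. Qed.

Section Circ.
Variables (G X : finType) (C : set_circuit G X) (t : vtree X) (sigma : G -> seq bool).
Hypotheses (wf : wf_circuit C) (vt : vtree_for C t) (st : structuring C t sigma).

Fixpoint visitA (n : nat) (h : G) : seq (aev X) :=
  if n is n'.+1 then
    ATick :: (match mu C h with
             | GUnion => flatten [seq visitA n' h' | h' <- enum (fun h' => wire C h' h)]
             | GVar => rcons (nseq #|svar C h| ATick)
                             (AOut (svar C h) (#|svar C h| + (svar C h == set0)))
             | GTimes => match left_input C sigma h, right_input C sigma h with
                         | Some gL, Some gR => nestA (visitA n' gL) (visitA n' gR)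
                         | _, _ => [::]
                         end
             | _ => [::]
             end) ++ [:: ATick]
  else [::].

Lemma strip_visit n h : strip (visitA n h) = visit C sigma n h.
Proof.
elim: n h => [|n IH] h //=.
rewrite /strip map_cat /= -/(strip _); congr (_ :: _ ++ _).
case: (mu C h) => //=.
- by rewrite /strip map_rcons map_nseq.
- case: (left_input C sigma h) => [gL|] //; case: (right_input C sigma h) => [gR|] //.
  by rewrite strip_nest !IH.
- rewrite /strip map_flatten -map_comp; congr flatten; apply: eq_map => h' /=.
  exact: IH.
Qed.


Lemma subtree_at_rcons (u : vtree X) p b : subtree_at u (rcons p b) =
  if subtree_at u p is Some (VNode l r) then Some (if b then r else l) else None.
Proof.
elim: p u => [|c p IH] [L|l r] //=.
by case: b; [case: r | case: l].
Qed.

Definition lab (p : seq bool) : {set X} :=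
  if subtree_at t p is Some u then \bigcup_(L <- vleaves u) L else set0.

Definition pdisj (s : seq {set X}) :=
  forall i j, i < j < size s -> [disjoint nth set0 s i & nth set0 s j].

Lemma pdisj_catl s1 s2 : pdisj (s1 ++ s2) -> pdisj s1.
Proof.
move=> H i j /andP[Hij Hj]; have Hi : i < size s1 by apply: ltn_trans Hj.
have := H i j; rewrite !nth_cat Hi Hj size_cat; apply.
by rewrite Hij /= ltn_addr.
Qed.

Lemma pdisj_catr s1 s2 : pdisj (s1 ++ s2) -> pdisj s2.
Proof.
move=> H i j /andP[Hij Hj].
have := H (size s1 + i) (size s1 + j); rewrite !nth_cat !ltnNge !leq_addr /= !addKn.
apply; rewrite -!ltnNge size_cat !ltn_add2l Hij //.
Qed.

Lemma in_bigcup_seq (s : seq {set X}) x : x \in \bigcup_(L <- s) L ->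
  exists2 i, i < size s & x \in nth set0 s i.
Proof.
elim: s => [|L s IH]; first by rewrite big_nil inE.
rewrite big_cons in_setU => /orP[H|/IH[i Hi Hx]]; first by exists 0.
by exists i.+1.
Qed.

Lemma pdisj_cross s1 s2 : pdisj (s1 ++ s2) ->
  [disjoint \bigcup_(L <- s1) L & \bigcup_(L <- s2) L].
Proof.
move=> H; rewrite -setI_eq0; apply/eqP/setP => x; rewrite in_setI in_set0.
apply/negP => /andP[/in_bigcup_seq[i Hi Hx] /in_bigcup_seq[j Hj Hy]].
have E : (size s1 + j < size s1) = false by rewrite ltnNge leq_addr.
have := H i (size s1 + j); rewrite !nth_cat Hi E addKn.
rewrite size_cat ltn_add2l Hj (leq_trans Hi (leq_addr _ _)) => /(_ isT) D.
by rewrite (disjointFr D Hx) in Hy.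
Qed.

Lemma pdisj_sub (u v : vtree X) p : pdisj (vleaves u) -> subtree_at u p = Some v ->
  pdisj (vleaves v).
Proof.
elim: p u => [|b p IH] [L|l r] //= H; try by move=> [<-].
apply: IH.
by case: b; [apply: pdisj_catr H | apply: pdisj_catl H].
Qed.

Lemma wire_sigma g' g : wire C g' g ->
  sigma g' = sigma g \/ exists b, sigma g' = rcons (sigma g) b.
Proof.
case: st => _ _ H _ /H [->|[_ [->|->]]]; [by left|by right; exists false|by right; exists true].
Qed.

Lemma pfx_wire g' g : wire C g' g -> prefix (sigma g) (sigma g').
Proof. by case/wire_sigma => [->|[b ->]]; rewrite ?prefix_refl ?prefix_rcons. Qed.

Lemma lab_wire g' g : wire C g' g -> lab (sigma g') \subset lab (sigma g).
Proof.
case/wire_sigma => [->|[b ->]]; first exact: subxx.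
rewrite /lab subtree_at_rcons; case: (subtree_at t (sigma g)) => [[L|l r]|] //=;
  try exact: sub0set.
rewrite big_cat /=; case: b; [exact: subsetUr | exact: subsetUl].
Qed.

Lemma prefix_lr p s : prefix (rcons p false) s -> prefix (rcons p true) s -> False.
Proof.
rewrite !prefixE !size_rcons => /eqP -> /eqP/(congr1 (last false)).
by rewrite !last_rcons.
Qed.

Definition INV (h : G) (p : {set X} * nat) : Prop :=
  p.1 \subset lab (sigma h) /\
  (p.2 = #|p.1| \/ (p.2 = #|p.1|.+1 /\
     exists v, [/\ mu C v = GVar, svar C v = set0 & prefix (sigma h) (sigma v)])).

Lemma capt_varE h S : mu C h = GVar -> captures C h S -> S = svar C h.
Proof.
move=> Hm Hc; case: Hc Hm => [g0 _|g0 H|g0 g1 g2 S1 S2 H _ _ _ _ _|g0 g' S0 H _ _] //= H';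
  congruence.
Qed.

Lemma capt_unionE h S : mu C h = GUnion -> captures C h S ->
  exists2 g', wire C g' h & captures C g' S.
Proof.
move=> Hm Hc; case: Hc Hm => [g0 H|g0 H|g0 g1 g2 S1 S2 H _ _ _ _ _|g0 g' S0 H W Hc] //= H';
  try congruence.
by exists g'.
Qed.

Lemma capt_timesE h S : mu C h = GTimes -> captures C h S ->
  exists g1 g2 S1 S2, [/\ wire C g1 h, wire C g2 h & g1 != g2] /\
    [/\ captures C g1 S1, captures C g2 S2 & S = S1 :|: S2].
Proof.
move=> Hm Hc; case: Hc Hm => [g0 H|g0 H|g0 g1 g2 S1 S2 H W1 W2 N C1 C2|g0 g' S0 H W Hc] //= H';
  try congruence.
by exists g1, g2, S1, S2.
Qed.


Lemma var_Good m (A : {set X}) w : #|A| <= w -> 0 < w -> #|A| <= m * w ->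
  Good m (rcons (nseq #|A| ATick) (AOut A w)).
Proof.
move=> H1 H2 H3; apply/and5P; split.
- by rewrite -cats1 okr_nseq /= add0n H3.
- by rewrite -cats1 fin_nseq /=.
- by rewrite -cats1 aouts_cat aouts_nseq.
- by rewrite /allw1 -cats1 aouts_cat aouts_nseq /= H2.
- by rewrite /allsz -cats1 aouts_cat aouts_nseq /= H1.
Qed.

Lemma two_inputs h gL gR x : #|inputs C h| = 2 -> wire C gL h -> wire C gR h ->
  gL != gR -> wire C x h -> x = gL \/ x = gR.
Proof.
move=> H2 WL WR N Wx.
have E : [set gL; gR] = inputs C h.
  apply/eqP; rewrite eqEcard cards2 N H2 leqnn andbT.
  by apply/subsetP => y /set2P[->|->]; rewrite inE.
have : x \in inputs C h by rewrite inE.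
by rewrite -E => /set2P.
Qed.

Lemma main n : forall h k, mu C h \notin [:: GTop; GBot] ->
  (forall g p, path (wire C) g p -> last g p = h -> size p <= k) -> k < n ->
  [/\ Good (5 * k + 5) (visitA n h),
      (forall p, p \in aouts (visitA n h) -> INV h p) &
      (forall S, S \in map fst (aouts (visitA n h)) <-> captures C h S)].
Proof.
have wf5 : forall g' g, wire C g' g -> mu C g' \notin [:: GTop; GBot].
  by case: wf => _ _ _ _ H g' g W; apply/negP => /(H g' g); rewrite W.
have child : forall h k c,
    (forall g p, path (wire C) g p -> last g p = h -> size p <= k) -> wire C c h ->
    (forall g p, path (wire C) g p -> last g p = c -> size p <= k.-1) /\ 0 < k.
  move=> h k c Hk W; split; last first.
    by have := Hk c [:: h]; rewrite /= W => /(_ isT erefl).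
  move=> g p P L; have := Hk g (rcons p h).
  rewrite rcons_path P L W last_rcons size_rcons => /(_ isT erefl); lia.
elim: n => [|n IH] h k Hmu Hk Hkn //.
case E: (mu C h) Hmu => // _.
-
  set s := svar C h.
  have -> : visitA n.+1 h = wrap (rcons (nseq #|s| ATick) (AOut s (#|s| + (s == set0)))).
    by rewrite /= E.
  have Hw1 : 0 < #|s| + (s == set0).
    by case: (s =P set0) => [->|/eqP]; rewrite ?addn1 // addn0 card_gt0.
  have G0 : Good (2 + 3) (wrap (rcons (nseq #|s| ATick) (AOut s (#|s| + (s == set0))))).
    apply: Good_wrap; apply: var_Good; rewrite ?leq_addr //.
    by move: Hw1; lia.
  split.
  + apply: Good_mono G0; lia.
  + rewrite aouts_wrap -cats1 aouts_cat aouts_nseq /= => p; rewrite inE => /eqP -> /=.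
    split.
      have [L [HL HsL]] := (match st with And4 _ H _ _ => H end) h E.
      by rewrite /lab HL /= big_seq1.
    case: (s =P set0) => [Hs0|_]; last by left; rewrite addn0.
    right; rewrite Hs0 cards0; split => //; exists h; split => //; exact: prefix_refl.
  + move=> S; rewrite aouts_wrap -cats1 aouts_cat aouts_nseq /= inE; split.
      by move/eqP => ->; apply: capt_var.
    by move/(capt_varE E) => ->.
-
  have [st1 _ _ st4] := st.
  have [gL [gR [WL WR SL SR]]] := st4 h E.
  have NLR : gL != gR.
    apply/eqP => EQ; move: SL; rewrite EQ SR /lchild /rchild => /(congr1 (last false)).
    by rewrite !last_rcons.
  have two : forall x, wire C x h -> x = gL \/ x = gR.
    move=> x Wx; apply: (two_inputs _ WL WR NLR Wx).
    by case: wf => _ _ _ [H _] _; apply: H.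
  have LI : left_input C sigma h = Some gL.
    rewrite /left_input; case: pickP => [x /andP[Wx /eqP Sx]|N].
      move: Sx; case: (two x Wx) => -> //; rewrite SR /lchild /rchild.
      by move/(congr1 (last false)); rewrite !last_rcons.
    by have := N gL; rewrite WL SL eqxx.
  have RI : right_input C sigma h = Some gR.
    rewrite /right_input; case: pickP => [x /andP[Wx /eqP Sx]|N].
      move: Sx; case: (two x Wx) => -> //; rewrite SL /lchild /rchild.
      by move/(congr1 (last false)); rewrite !last_rcons.
    by have := N gR; rewrite WR SR eqxx.
  have -> : visitA n.+1 h = wrap (nestA (visitA n gL) (visitA n gR)).
    by rewrite /= E LI RI.
  have k0 := (child h k gL Hk WL).2.
  have [GL IL CL] : [/\ Good (5 * k.-1 + 5) (visitA n gL),
      (forall p, p \in aouts (visitA n gL) -> INV gL p) &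
      (forall S, S \in map fst (aouts (visitA n gL)) <-> captures C gL S)].
    apply: IH; [exact: wf5 WL|exact: (child h k gL Hk WL).1|lia].
  have [GR IR CR] : [/\ Good (5 * k.-1 + 5) (visitA n gR),
      (forall p, p \in aouts (visitA n gR) -> INV gR p) &
      (forall S, S \in map fst (aouts (visitA n gR)) <-> captures C gR S)].
    apply: IH; [exact: wf5 WR|exact: (child h k gR Hk WR).1|lia].
  have /= := st1 gL; rewrite SL /lchild subtree_at_rcons.
  case Hsub: (subtree_at t (sigma h)) => [[L|l r]|] //= _.
  have labL : lab (sigma gL) = \bigcup_(L <- vleaves l) L.
    by rewrite /lab SL /lchild subtree_at_rcons Hsub.
  have labR : lab (sigma gR) = \bigcup_(L <- vleaves r) L.
    by rewrite /lab SR /rchild subtree_at_rcons Hsub.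
  have labH : lab (sigma h) = \bigcup_(L <- vleaves l) L :|: \bigcup_(L <- vleaves r) L.
    by rewrite /lab Hsub /= big_cat.
  have disj : [disjoint \bigcup_(L <- vleaves l) L & \bigcup_(L <- vleaves r) L].
    by apply: pdisj_cross; exact: (pdisj_sub (proj1 vt) Hsub).
  split.
  + have le : 5 * k.-1 + 5 <= 5 * k by lia.
    have G1 := Good_nest (Good_mono le GL) (Good_mono le GR).
    apply: Good_mono (Good_wrap G1); lia.
  + rewrite aouts_cat /= cats0 aouts_nest => p /allpairsP [[[A1 w1] [A2 w2]] [Ha Hb ->]] /=.
    have [S1 H1] := IL _ Ha; have [S2 H2] := IR _ Hb.
    rewrite /= labL in S1; rewrite /= labR in S2.
    have D : [disjoint A1 & A2] by apply: disjointWl S1 (disjointWr S2 disj).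
    have card : #|A1 :|: A2| = #|A1| + #|A2|.
      by have := cardsUI A1 A2; rewrite disjoint_setI0 // cards0 addn0.
    split; first by rewrite labH; apply: setUSS.
    rewrite card; move: H1 H2 => /= [->|[-> [v1 [V1 V2 V3]]]] [->|[-> [v2 [U1 U2 U3]]]].
    * by left.
    * right; split; first by rewrite addnS.
      by exists v2; split => //; apply: prefix_trans U3; rewrite SR prefix_rcons.
    * right; split; first by rewrite addSn.
      by exists v1; split => //; apply: prefix_trans V3; rewrite SL prefix_rcons.
    * exfalso; have Ev : v1 = v2.
        by case: wf => _ H _ _ _; apply: H => //; rewrite V2 U2.
      rewrite SL in V3; rewrite SR -Ev in U3; exact: prefix_lr V3 U3.
  + move=> S; rewrite aouts_cat /= cats0 aouts_nest; split.
      case/mapP => p /allpairsP [[a b] [Ha Hb ->]] -> /=.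
      apply: (capt_times E WL WR NLR).
        by apply/CL; exact: map_f.
      by apply/CR; exact: map_f.
    case/(capt_timesE E) => g1 [g2 [S1 [S2 [[W1 W2 N12] [C1 C2 ->]]]]].
    have mk : forall SL SR, SL \in map fst (aouts (visitA n gL)) ->
        SR \in map fst (aouts (visitA n gR)) ->
        SL :|: SR \in map fst [seq (p.1 :|: q.1, p.2 + q.2) | p <- aouts (visitA n gL), q <- aouts (visitA n gR)].
      move=> SL' SR' /mapP [a Ha ->] /mapP [b Hb ->].
      by apply/mapP; exists (a.1 :|: b.1, a.2 + b.2) => //; apply/allpairsP; exists (a, b).
    case: (two g1 W1) => E1; case: (two g2 W2) => E2; subst g1 g2.
    * by rewrite eqxx in N12.
    * by apply: mk; [apply/CL|apply/CR].
    * by rewrite setUC; apply: mk; [apply/CL|apply/CR].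
    * by rewrite eqxx in N12.
-
  set cs := enum (fun h' => wire C h' h).
  have -> : visitA n.+1 h = wrap (flatten [seq visitA n h' | h' <- cs]) by rewrite /= E.
  have [c0 Hc0] : exists c0, wire C c0 h.
    case: wf => _ _ _ [_ H] _; have /set0Pn[c0] : inputs C h != set0.
      by rewrite -card_gt0 H.
    by rewrite inE => W; exists c0.
  have k0 := (child h k c0 Hk Hc0).2.
  have Hc : forall c, c \in cs -> [/\ Good (5 * k.-1 + 5) (visitA n c),
      (forall p, p \in aouts (visitA n c) -> INV c p) &
      (forall S, S \in map fst (aouts (visitA n c)) <-> captures C c S)].
    move=> c; rewrite mem_enum => W; apply: IH.
    - exact: wf5 W.
    - exact: (child h k c Hk W).1.
    - lia.
  split.
  + have G1 : Good (5 * k) (flatten [seq visitA n h' | h' <- cs]).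
      apply: Good_flatten.
        rewrite all_map; apply/allP => c Hc' /=.
        have [Gd _ _] := Hc c Hc'; apply: Good_mono Gd; lia.
      rewrite has_map; apply/hasP; exists c0; first by rewrite mem_enum.
      have [Gd _ _] := Hc c0 ltac:(by rewrite mem_enum); by case/and5P: Gd.
    apply: Good_mono (Good_wrap G1); lia.
  + rewrite aouts_wrap aouts_flatten -map_comp => p /flattenP [sp /mapP [c Hc' ->] Hp].
    have [_ I _] := Hc c Hc'; have [Hsub Hw] := I p Hp.
    have W : wire C c h by rewrite mem_enum in Hc'.
    split; first exact: subset_trans Hsub (lab_wire W).
    case: Hw => [->|[-> [v [V1 V2 V3]]]]; [by left|right; split => //].
    by exists v; split => //; exact: prefix_trans (pfx_wire W) V3.
  + move=> S; rewrite aouts_wrap aouts_flatten -map_comp; split.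
      case/mapP => p /flattenP [sp /mapP [c Hc' ->] Hp] ->.
      have W : wire C c h by rewrite mem_enum in Hc'.
      apply: (capt_union E W); have [_ _ Cc] := Hc c Hc'; apply/Cc.
      exact: map_f.
    case/(capt_unionE E) => c W Hcap.
    have Hc' : c \in cs by rewrite mem_enum.
    have [_ _ Cc] := Hc c Hc'; have /mapP [p Hp ->] := (proj2 (Cc S) Hcap).
    apply: map_f; apply/flattenP; exists (aouts (visitA n c)) => //.
    by apply/mapP; exists c.
Qed.

End Circ.

Lemma path_uniq (G : finType) (e : rel G) :
  (forall g g', e g' g -> ~~ connect e g g') ->
  forall x p, path e x p -> uniq (x :: p).
Proof.
move=> H x p; elim: p x => [|y p IH] x //= /andP[Exy Pp].
have U := IH y Pp; apply/andP; split; last exact: U.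
apply/negP => Hx; have := path_connect Pp Hx.
by move: (H y x Exy) => /negP.
Qed.

Theorem proposition4p2 :
  exists c : nat,
  forall (G X : finType) (C : set_circuit G X) (t : vtree X)
         (sigma : G -> seq bool) (d : nat) (g : G),
    wf_circuit C -> vtree_for C t -> structuring C t sigma ->
    is_depth C d -> mu C g = GUnion ->
    (forall S : {set X}, S \in outputs (Enum C sigma g) <-> captures C g S) /\
    delay_bounded (fun n => c * d.+1 * n.+1) (Enum C sigma g).
Proof.
exists 10 => G X C t sigma d g wf vt st [[g0 [p0 [P0 S0]]] Hd] Eg.
have Hdn : d < #|G|.
  have U := path_uniq (match wf with And5 H _ _ _ _ => H end) P0.
  have := max_card (mem (g0 :: p0)); move/card_uniqP: U => ->; by rewrite /= S0.
have [Gd I Cr] := @main G X C t sigma wf vt st #|G| g d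
  ltac:(by rewrite Eg) ltac:(by move=> g1 p P _; exact: Hd g1 p P) Hdn.
rewrite /Enum -strip_visit outputs_strip; split; first exact: Cr.
case/and5P: Gd => H1 H2 _ _ _.
apply: (@final_gaps X (5 * d + 5) d _ 0 0 0) => //.
- apply/allP => p Hp; have [_ [->|[-> _]]] := I p Hp; lia.
- lia.
Qed.
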